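(* Let $L$ be a varietal $\mathbb{M}$-compositional family of logics. An $\mathbb{M}$-algebra $\mathfrak{A}$ is $L$-definable if, and only if, it belongs to the pseudo-variety generated by all theory algebras $\Theta_\Delta X$, where $X$ ranges over alphabets and $\Delta\subseteq L$ over sort-wise finite subfamilies such that $\sqsubseteq_{\Delta}$ is a congruence ordering.
   Context: Fix a set $\Xi$ of sorts; $\mathsf{Pos}^\Xi$: $\Xi$-sorted families of partial orders with sort-wise monotone maps. $\mathbb{M}$ is a monad on $\mathsf{Pos}^\Xi$ ($\mathrm{flat},\mathrm{sing}$) preserving injective, surjective, bijective functions and preimages and using the standard ordering. $\mathbb{M}$-algebras $\langle A,\pi\rangle$: $\pi\circ\mathbb{M}\pi=\pi\circ\mathrm{flat}$, $\pi\circ\mathrm{sing}=\mathrm{id}$. Finitary: sort-wise finite and finitely generated. A preorder $\sqsubseteq$ containing the order is a congruence ordering if $\mathbb{M}q(s)\leq\mathbb{M}q(t)\Rightarrow\pi(s)\sqsubseteq\pi(t)$, $q$ the quotient map onto the ordered set of classes; the quotient algebra's product satisfies $\pi\circ\mathbb{M}q=q\circ\pi$. Quotient of $\mathfrak{B}$: codomain of a surjective morphism from $\mathfrak{B}$. For $\Delta\subseteq\Xi$: $A|_\Delta$ the part with sorts in $\Delta$, $\mathfrak{A}|_\Delta$ the $\mathbb{M}|_\Delta$-algebra on it ($\mathbb{M}|_\Delta A:=(\mathbb{M}(A|_\Delta))|_\Delta$, restricted product). $\mathfrak{B}$ is a sort-accumulation point of $\mathcal{A}$ if for every finite $\Delta\subseteq\Xi$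 there is $\mathfrak{A}\in\mathcal{A}$ with $\mathfrak{B}|_\Delta$ a quotient of $\mathfrak{A}|_\Delta$. A pseudo-variety is a class of finitary algebras closed under quotients, finitary subalgebras of finite products and sort-accumulation points; ''generated by'' = smallest containing. Alphabet: finite unordered $\Sigma$; language $K\subseteq\mathbb{M}_\xi\Sigma$; contexts and derivatives $p^{-1}[K]$ as usual (substitution into a hole $\Box$); a variety of languages is closed under finite unions, intersections, inverse algebra morphisms $\mathbb{M}\Sigma\to\mathbb{M}\Gamma$ and derivatives. A logic: $\Xi$-sorted formulae and models with satisfaction; for a set $\Delta$ of formulae, $M\sqsubseteq_\Delta N$ iff every formula of $\Delta$ true in $M$ is true in $N$. A family of logics $L$ assigns to each alphabet $\Sigma$ a logic $L[\Sigma]$ with models $\mathbb{M}\Sigma$ and to each $f:\Sigma\to\Gamma$ a sort-preserving $\lambda_f:L[\Gamma]\to L[\Sigma]$ with $s\models\lambda_f(\varphi)\iff\mathbb{M}f(s)\models\varphi$. $K$ is $L$-definable if $K=\{s:s\models\varphi\}$ for some formula; for finite ordered $C$, $K\subseteq\mathbb{M}C$ is $L$-definable if its preimage under $\mathbb{M}\iota$ ($\iota$ the identity from $C$ with trivial order) is. $L$ is varietal if $L$-definable languages form a variety of languages. A subfamily $\Delta\subseteq L$ picks $\Delta[\Sigma]\subseteq L[\Sigma]$ (finite / sort-wise finite if each $\Delta[\Sigma]$ is finite / finite in each sort, up to equivalence). $L$ is $\mathbb{M}$-compositional if for every finite subfamily $\Phi$ there is a sort-wise finite $\Delta\supseteq\Phi$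 with $\sqsubseteq_{\Delta[\Sigma]}$ a congruence ordering on $\mathbb{M}\Sigma$ for all $\Sigma$; for such $\Delta$, $\Theta_\Delta\Sigma:=\mathbb{M}\Sigma/{\sqsubseteq_{\Delta[\Sigma]}}$. A finite $C\subseteq A$ is $L$-definably embedded if $\pi^{-1}(\uparrow a)\cap\mathbb{M}C$ is $L$-definable for each $a\in A$; $\mathfrak{A}$ is $L$-definable if finitary and all finite subsets are $L$-definably embedded. *)

(* Defs.v *)
From Stdlib Require Import List ClassicalEpsilon FunctionalExtensionality
  PropExtensionality ProofIrrelevance.
Record SPos (Xi : Type) : Type := {
  car : Xi -> Type;
  le : forall x, car x -> car x -> Prop;
  le_refl : forall x a, le x a a;
  le_trans : forall x a b c, le x a b -> le x b c -> le x a c;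
  le_antisym : forall x a b, le x a b -> le x b a -> a = b }.
Arguments car {Xi} s x.
Arguments le {Xi} s x _ _.
Arguments le_refl {Xi} s {x} a.
Arguments le_trans {Xi} s {x a b c} _ _.
Arguments le_antisym {Xi} s {x a b} _ _.

Record mor Xi (A B : SPos Xi) : Type := {
  fn : forall x, car A x -> car B x;
  fn_mono : forall x a b, le A x a b -> le B x (fn x a) (fn x b) }.
Arguments mor {Xi} A B.
Arguments fn {Xi A B} m x _.
Arguments fn_mono {Xi A B} m {x a b} _.

Definition mid {Xi : Type} (A : SPos Xi) : mor A A :=
  {| fn := fun x a => a; fn_mono := fun x a b h => h |}.
Definition mcomp {Xi : Type} {A B C : SPos Xi} (g : mor B C) (f : mor A B) : mor A C :=
  {| fn := fun x a => fn g x (fn f x a);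
     fn_mono := fun x a b h => fn_mono g (fn_mono f h) |}.

Definition sort_surj {Xi : Type} {A B : SPos Xi} (f : mor A B) : Prop :=
  forall x (b : car B x), exists a, fn f x a = b.
Definition sort_inj {Xi : Type} {A B : SPos Xi} (f : mor A B) : Prop :=
  forall x (a a' : car A x), fn f x a = fn f x a' -> a = a'.

Definition sub {Xi : Type} (A : SPos Xi) (P : forall x, car A x -> Prop) : SPos Xi.
Proof.
  refine {| car := fun x => {a : car A x | P x a};
            le := fun x a b => le A x (proj1_sig a) (proj1_sig b) |}.
  - intros; apply le_refl.
  - intros x a b c; apply le_trans.
  - intros x [a pa] [b pb] h1 h2; simpl in *.
    pose proof (le_antisym _ h1 h2); subst. f_equal. apply proof_irrelevance.
Defined.

Definition incl {Xi : Type} (A : SPos Xi) (P : forall x, car A x -> Prop) : mor (sub A P) A :=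
  {| fn := fun x (a : car (sub A P) x) => proj1_sig a; fn_mono := fun x a b h => h |}.

Definition pairpos {Xi : Type} (A B : SPos Xi) : SPos Xi.
Proof.
  refine {| car := fun x => (car A x * car B x)%type;
            le := fun x p q => le A x (fst p) (fst q) /\ le B x (snd p) (snd q) |}.
  - intros; split; apply le_refl.
  - intros x p q r [h1 h2] [h3 h4]; split; eapply le_trans; eauto.
  - intros x [a b] [c d] [h1 h2] [h3 h4]; simpl in *.
    f_equal; apply le_antisym; auto.
Defined.

Definition fstm {Xi : Type} (A B : SPos Xi) : mor (pairpos A B) A :=
  {| fn := fun x (p : car (pairpos A B) x) => fst p; fn_mono := fun x p q h => proj1 h |}.
Definition sndm {Xi : Type} (A B : SPos Xi) : mor (pairpos A B) B :=
  {| fn := fun x (p : car (pairpos A B) x) => snd p; fn_mono := fun x p q h => proj2 h |}.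

Definition relpos {Xi : Type} (A : SPos Xi) : SPos Xi :=
  sub (pairpos A A) (fun x p => le A x (fst p) (snd p)).
Definition relp1 {Xi : Type} (A : SPos Xi) : mor (relpos A) A :=
  mcomp (fstm A A) (incl _ _).
Definition relp2 {Xi : Type} (A : SPos Xi) : mor (relpos A) A :=
  mcomp (sndm A A) (incl _ _).

Record Monad (Xi : Type) : Type := {
  Mo : SPos Xi -> SPos Xi;
  Mmap : forall A B, mor A B -> mor (Mo A) (Mo B);
  msing : forall A, mor A (Mo A);
  mflat : forall A, mor (Mo (Mo A)) (Mo A);
  Mmap_id : forall A x s, fn (Mmap _ _ (mid A)) x s = s;
  Mmap_comp : forall A B C (f : mor A B) (g : mor B C) x s,
      fn (Mmap _ _ (mcomp g f)) x s = fn (Mmap _ _ g) x (fn (Mmap _ _ f) x s);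
  msing_nat : forall A B (f : mor A B) x a,
      fn (Mmap _ _ f) x (fn (msing A) x a) = fn (msing B) x (fn f x a);
  mflat_nat : forall A B (f : mor A B) x s,
      fn (Mmap _ _ f) x (fn (mflat A) x s) = fn (mflat B) x (fn (Mmap _ _ (Mmap _ _ f)) x s);
  mflat_sing : forall A x s, fn (mflat A) x (fn (msing (Mo A)) x s) = s;
  mflat_Msing : forall A x s, fn (mflat A) x (fn (Mmap _ _ (msing A)) x s) = s;
  mflat_assoc : forall A x s,
      fn (mflat A) x (fn (mflat (Mo A)) x s) = fn (mflat A) x (fn (Mmap _ _ (mflat A)) x s);
  pres_inj : forall A B (f : mor A B), sort_inj f -> sort_inj (Mmap _ _ f);
  pres_surj : forall A B (f : mor A B), sort_surj f -> sort_surj (Mmap _ _ f);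
  (* M preserves preimages: M(f^-1[C]) = (Mf)^-1[MC] *)
  pres_preim : forall A B (f : mor A B) (P : forall x, car B x -> Prop) x
      (s : car (Mo A) x),
      (exists u : car (Mo (sub B P)) x, fn (Mmap _ _ (incl B P)) x u = fn (Mmap _ _ f) x s) <->
      (exists v : car (Mo (sub A (fun y a => P y (fn f y a)))) x,
          fn (Mmap _ _ (incl _ _)) x v = s);
  std_order : forall A x (s t : car (Mo A) x),
      le (Mo A) x s t <->
      exists u : car (Mo (relpos A)) x,
        fn (Mmap _ _ (relp1 A)) x u = s /\ fn (Mmap _ _ (relp2 A)) x u = t }.
Arguments Mo {Xi} m A.
Arguments Mmap {Xi} m {A B} f.
Arguments msing {Xi} m A.
Arguments mflat {Xi} m A.

Record PreAlg Xi {T : Monad Xi} : Type := {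
  acar : SPos Xi;
  aprod : mor (Mo T acar) acar }.
Arguments PreAlg {Xi} T.
Arguments acar {Xi T} p.
Arguments aprod {Xi T} p.

Definition is_alg {Xi : Type} {T : Monad Xi} (A : PreAlg T) : Prop :=
  (forall x s, fn (aprod A) x (fn (Mmap T (aprod A)) x s)
               = fn (aprod A) x (fn (mflat T (acar A)) x s)) /\
  (forall x a, fn (aprod A) x (fn (msing T (acar A)) x a) = a).

Definition is_morph {Xi : Type} {T : Monad Xi} (A B : PreAlg T) (h : mor (acar A) (acar B)) : Prop :=
  forall x s, fn h x (fn (aprod A) x s) = fn (aprod B) x (fn (Mmap T h) x s).

Definition freealg {Xi : Type} (T : Monad Xi) (S : SPos Xi) : PreAlg T :=
  {| acar := Mo T S; aprod := mflat T S |}.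

Definition spos_finite {Xi : Type} (A : SPos Xi) : Prop :=
  exists l : list {x : Xi & car A x}, forall x a, In (existT _ x a) l.
Definition sortwise_finite {Xi : Type} (A : SPos Xi) : Prop :=
  forall x, exists l : list (car A x), forall a, In a l.
Definition fin_subset {Xi : Type} (A : SPos Xi) (P : forall x, car A x -> Prop) : Prop :=
  spos_finite (sub A P).

Definition fin_generated {Xi : Type} {T : Monad Xi} (A : PreAlg T) : Prop :=
  exists P, fin_subset (acar A) P /\
    forall x a, exists s : car (Mo T (sub (acar A) P)) x,
      fn (aprod A) x (fn (Mmap T (incl _ P)) x s) = a.

Definition finitary {Xi : Type} {T : Monad Xi} (A : PreAlg T) : Prop :=
  is_alg A /\ sortwise_finite (acar A) /\ fin_generated A.

Definition alg_closed {Xi : Type} {T : Monad Xi} (A : PreAlg T) (P : forall x, car (acar A) x -> Prop) :=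
  forall x (s : car (Mo T (sub (acar A) P)) x),
    P x (fn (aprod A) x (fn (Mmap T (incl _ P)) x s)).

Definition subalg {Xi : Type} {T : Monad Xi} (A : PreAlg T) (P : forall x, car (acar A) x -> Prop)
  (H : alg_closed A P) : PreAlg T.
Proof.
  refine {| acar := sub (acar A) P;
            aprod := {| fn := fun x s => (exist _ _ (H x s) : car (sub (acar A) P) x) |} |}.
  intros x a b h; simpl. apply (fn_mono (aprod A)). apply (fn_mono (Mmap T (incl _ P))). exact h.
Defined.

Definition piPos {Xi : Type} {n : nat} (F : {i : nat | i < n} -> SPos Xi) : SPos Xi.
Proof.
  refine {| car := fun x => forall i, car (F i) x;
            le := fun x a b => forall i, le (F i) x (a i) (b i) |}.
  - intros; apply le_refl.
  - intros x a b c h1 h2 i; eapply le_trans; eauto.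
  - intros x a b h1 h2; apply functional_extensionality_dep; intro i; apply le_antisym; auto.
Defined.

Definition piProj {Xi : Type} {n : nat} (F : {i : nat | i < n} -> SPos Xi) i : mor (piPos F) (F i) :=
  {| fn := fun x (a : car (piPos F) x) => a i; fn_mono := fun x a b h => h i |}.

Definition prodalg {Xi : Type} {T : Monad Xi} {n : nat} (F : {i : nat | i < n} -> PreAlg T) : PreAlg T.
Proof.
  refine {| acar := piPos (fun i => acar (F i));
            aprod := {| fn := fun x s => ((fun i =>
               fn (aprod (F i)) x (fn (Mmap T (piProj (fun i => acar (F i)) i)) x s))
               : car (piPos (fun i => acar (F i))) x) |} |}.
  intros x a b h i; simpl. apply (fn_mono (aprod (F i))), (fn_mono (Mmap T _)), h.
Defined.

(* restriction to a set of sorts D : A|_D, realised as a Xi-sorted poset that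
   is empty outside D *)
Definition res {Xi : Type} (A : SPos Xi) (D : Xi -> Prop) : SPos Xi := sub A (fun x _ => D x).

(* B|_D is a quotient of A|_D (as M|_D-algebras) *)
Definition res_quotient {Xi : Type} {T : Monad Xi} (D : Xi -> Prop) (A B : PreAlg T) : Prop :=
  exists h : mor (res (acar A) D) (res (acar B) D),
    sort_surj h /\
    forall x (d : D x) (s : car (Mo T (res (acar A) D)) x),
      fn h x (exist _ (fn (aprod A) x (fn (Mmap T (incl _ _)) x s)) d)
      = exist _ (fn (aprod B) x (fn (Mmap T (incl _ _)) x (fn (Mmap T h) x s))) d.

Definition finite_sorts {Xi : Type} (D : Xi -> Prop) : Prop :=
  exists l : list Xi, forall x, D x -> In x l.

Definition pseudovariety {Xi : Type} {T : Monad Xi} (V : PreAlg T -> Prop) : Prop :=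
  (forall A, V A -> finitary A) /\
  (forall A B (h : mor (acar A) (acar B)),
      V A -> is_alg B -> is_morph A B h -> sort_surj h -> V B) /\
  (forall n (F : {i : nat | i < n} -> PreAlg T) P (H : alg_closed (prodalg F) P),
      (forall i, V (F i)) -> finitary (subalg _ _ H) -> V (subalg _ _ H)) /\
  (* closed under (finitary) sort-accumulation points *)
  (forall B, finitary B ->
      (forall D, finite_sorts D -> exists A, V A /\ res_quotient D A B) -> V B).

Definition generated_pv {Xi : Type} {T : Monad Xi} (K : PreAlg T -> Prop) (A : PreAlg T) : Prop :=
  forall V, pseudovariety V -> (forall B, K B -> V B) -> V A.

Section Quot.
Variables (Xi : Type) (A : SPos Xi) (R : forall x, car A x -> car A x -> Prop).
Hypothesis Ht : forall x a b c, R x a b -> R x b c -> R x a c.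
Hypothesis Hc : forall x a b, le A x a b -> R x a b.

Definition cls {x} (a : car A x) : car A x -> Prop := fun b => R x a b /\ R x b a.

Lemma Rrefl x a : R x a a. Proof. apply Hc, le_refl. Qed.

Lemma cls_R x a b : cls a = cls b -> R x a b.
Proof.
  intro e. assert (h : cls b b) by (split; apply Rrefl).
  rewrite <- e in h. exact (proj1 h).
Qed.

Definition qpos : SPos Xi.
Proof.
  refine {| car := fun x => {S : car A x -> Prop | exists a, S = cls a};
            le := fun x S T => exists a b, proj1_sig S = cls a /\ proj1_sig T = cls b /\ R x a b |}.
  - intros x [S [a e]]; exists a, a; simpl; repeat split; auto; apply Rrefl.
  - intros x [S hS] [T hT] [U hU] [a [b [e1 [e2 r1]]]] [b' [c [e3 [e4 r2]]]]; simpl in *.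
    exists a, c; repeat split; auto.
    apply Ht with b; auto. apply Ht with b'; auto. apply cls_R. congruence.
  - intros x [S hS] [T hT] [a [b [e1 [e2 r1]]]] [b' [a' [e3 [e4 r2]]]]; simpl in *.
    assert (r3 : R x b a).
    { apply Ht with b'. apply cls_R; congruence.
      apply Ht with a'; auto. apply cls_R; congruence. }
    assert (e : S = T).
    { rewrite e1, e2.
      apply functional_extensionality; intro c; apply propositional_extensionality.
      unfold cls; split; intros [h1 h2]; split; eauto. }
    clear e1 e2 e3 e4. revert hS hT. rewrite e. intros. f_equal. apply proof_irrelevance.
Defined.

Definition qmap : mor A qpos.
Proof.
  refine {| fn := fun x a => (exist _ (cls a) (ex_intro _ a eq_refl) : car qpos x) |}.
  intros x a b h; simpl. exists a, b; repeat split; auto.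
Defined.

Lemma qmap_surj : sort_surj qmap.
Proof.
  intros x [S [a e]]. exists a. simpl. subst S. reflexivity.
Qed.
End Quot.
Arguments qpos {Xi A R} Ht Hc.
Arguments qmap {Xi A R} Ht Hc.
Arguments qmap_surj {Xi A R} Ht Hc.

Definition cong_with {Xi : Type} {T : Monad Xi} (B : PreAlg T)
  (R : forall x, car (acar B) x -> car (acar B) x -> Prop)
  (Ht : forall x a b c, R x a b -> R x b c -> R x a c)
  (Hc : forall x a b, le (acar B) x a b -> R x a b) : Prop :=
  forall x (s t : car (Mo T (acar B)) x),
    le (Mo T (qpos Ht Hc)) x (fn (Mmap T (qmap Ht Hc)) x s) (fn (Mmap T (qmap Ht Hc)) x t) ->
    R x (fn (aprod B) x s) (fn (aprod B) x t).

Definition cong_ordering {Xi : Type} {T : Monad Xi} (B : PreAlg T)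
  (R : forall x, car (acar B) x -> car (acar B) x -> Prop) : Prop :=
  exists Ht Hc, @cong_with Xi T B R Ht Hc.

(* the quotient algebra B / R, with product satisfying  pi o Mq = q o pi *)
Definition quot_pick {Xi : Type} {T : Monad Xi} {B : PreAlg T} {R} Ht Hc x
  (t : car (Mo T (@qpos Xi (acar B) R Ht Hc)) x) :
  {s : car (Mo T (acar B)) x | fn (Mmap T (qmap Ht Hc)) x s = t} :=
  constructive_indefinite_description _ (pres_surj _ T _ _ _ (qmap_surj Ht Hc) x t).

Definition quotalg {Xi : Type} {T : Monad Xi} {B : PreAlg T} {R Ht Hc}
  (H : @cong_with Xi T B R Ht Hc) : PreAlg T.
Proof.
  refine {| acar := qpos Ht Hc;
            aprod := {| fn := fun x t =>
               fn (qmap Ht Hc) x (fn (aprod B) x (proj1_sig (quot_pick Ht Hc x t))) |} |}.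
  intros x t t' h.
  destruct (quot_pick Ht Hc x t) as [s es]; destruct (quot_pick Ht Hc x t') as [s' es'].
  simpl. subst t t'.
  exists (fn (aprod B) x s), (fn (aprod B) x s'); repeat split. apply H, h.
Defined.

Record Alphabet (Xi : Type) : Type := {
  aset : SPos Xi;
  a_discrete : forall x a b, le aset x a b -> a = b;
  a_finite : spos_finite aset }.
Arguments aset {Xi} _.

Definition disc {Xi : Type} (C : SPos Xi) : SPos Xi.
Proof.
  refine {| car := car C; le := fun x a b => a = b |}.
  - reflexivity.
  - intros; congruence.
  - intros; auto.
Defined.

Definition disc_alph {Xi : Type} (C : SPos Xi) (Hf : spos_finite C) : Alphabet Xi :=
  {| aset := disc C; a_discrete := fun x a b h => h; a_finite := Hf |}.

Definition iota {Xi : Type} (C : SPos Xi) : mor (disc C) C :=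
  {| fn := fun x (a : car (disc C) x) => (a : car C x);
     fn_mono := fun x a b (h : a = b) =>
       match h in _ = b' return le C x a b' with eq_refl => le_refl C a end |}.

Record Logics {Xi : Type} (T : Monad Xi) : Type := {
  Form : Alphabet Xi -> Xi -> Type;
  sat : forall S x, car (Mo T (aset S)) x -> Form S x -> Prop;
  lam : forall S G (f : mor (aset S) (aset G)) x, Form G x -> Form S x;
  lam_spec : forall S G (f : mor (aset S) (aset G)) x s phi,
      sat S x s (lam S G f x phi) <-> sat G x (fn (Mmap T f) x s) phi }.
Arguments Form {Xi T} l S x.
Arguments sat {Xi T} l {S x} s phi.
Arguments lam {Xi T} l {S G} f {x} phi.

Section Lang.
Context {Xi : Type} {T : Monad Xi} (L : Logics T).

Definition definable (S : Alphabet Xi) (x : Xi) (K : car (Mo T (aset S)) x -> Prop) : Prop :=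
  exists phi : Form L S x, forall s, K s <-> sat L s phi.

Definition definableC (C : SPos Xi) (x : Xi) (K : car (Mo T C) x -> Prop) : Prop :=
  exists Hf : spos_finite C,
    definable (disc_alph C Hf) x (fun s => K (fn (Mmap T (iota C)) x s)).

(* contexts: p in M(A + {box}) with box a new element of sort zeta *)
Definition hole (A : SPos Xi) (zeta : Xi) : SPos Xi.
Proof.
  refine {| car := fun y => (car A y + {_ : unit | y = zeta})%type;
            le := fun y u v => match u, v with
                               | inl a, inl b => le A y a b
                               | inr _, inr _ => True
                               | _, _ => False end |}.
  - intros y [a|u]; [apply le_refl | exact I].
  - intros y [a|u] [b|v] [c|w]; simpl; try tauto. apply le_trans.
  - intros y [a|[[] e]] [b|[[] e']]; simpl; try tauto.
    + intros; f_equal; apply le_antisym; auto.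
    + intros; f_equal; f_equal; apply proof_irrelevance.
Defined.

Definition plug {A : SPos Xi} {zeta : Xi} (a : car A zeta) : mor (hole A zeta) A.
Proof.
  refine {| fn := fun y (u : car (hole A zeta) y) =>
              match u with
              | inl b => b
              | inr v => eq_rect_r (fun z => car A z) a (proj2_sig v)
              end |}.
  intros y [b|[[] e]] [c|[[] e']]; simpl; try tauto.
  intros _. rewrite (proof_irrelevance _ e e'). apply le_refl.
Defined.

Definition ctx_app {S : Alphabet Xi} {x zeta : Xi}
  (p : car (Mo T (hole (Mo T (aset S)) zeta)) x) (s : car (Mo T (aset S)) zeta)
  : car (Mo T (aset S)) x :=
  fn (mflat T (aset S)) x (fn (Mmap T (plug s)) x p).

Definition varietal : Prop :=
  (forall S x, definable S x (fun _ => False)) /\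
  (forall S x, definable S x (fun _ => True)) /\
  (forall S x K1 K2, definable S x K1 -> definable S x K2 ->
      definable S x (fun s => K1 s \/ K2 s)) /\
  (forall S x K1 K2, definable S x K1 -> definable S x K2 ->
      definable S x (fun s => K1 s /\ K2 s)) /\
  (forall S G (h : mor (Mo T (aset S)) (Mo T (aset G))),
      is_morph (freealg T (aset S)) (freealg T (aset G)) h ->
      forall x K, definable G x K -> definable S x (fun s => K (fn h x s))) /\
  (forall S x zeta (p : car (Mo T (hole (Mo T (aset S)) zeta)) x) K,
      definable S x K -> definable S zeta (fun s => K (ctx_app p s))).

Definition Subfam : Type := forall S x, Form L S x -> Prop.

Definition equivf {S x} (phi psi : Form L S x) : Prop :=
  forall s, sat L s phi <-> sat L s psi.

Definition finite_sub (D : Subfam) : Prop :=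
  forall S, exists l : list {x : Xi & Form L S x},
    (forall e, In e l -> D S (projT1 e) (projT2 e)) /\
    forall x phi, D S x phi -> exists psi, In (existT _ x psi) l /\ equivf phi psi.

Definition sortwise_finite_sub (D : Subfam) : Prop :=
  forall S x, exists l : list (Form L S x),
    (forall psi, In psi l -> D S x psi) /\
    forall phi, D S x phi -> exists psi, In psi l /\ equivf phi psi.

Definition sqle (D : Subfam) (S : Alphabet Xi) :
  forall x, car (Mo T (aset S)) x -> car (Mo T (aset S)) x -> Prop :=
  fun x s t => forall phi, D S x phi -> sat L s phi -> sat L t phi.

Definition compositional : Prop :=
  forall Phi : Subfam, finite_sub Phi ->
    exists Delta : Subfam, sortwise_finite_sub Delta /\
      (forall S x phi, Phi S x phi -> Delta S x phi) /\
      forall S, cong_ordering (freealg T (aset S)) (sqle Delta S).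

Definition theory_alg (B : PreAlg T) : Prop :=
  exists (S : Alphabet Xi) (Delta : Subfam), sortwise_finite_sub Delta /\
    exists Ht Hc (H : cong_with (freealg T (aset S)) (sqle Delta S) Ht Hc),
      B = quotalg H.

Definition def_embedded (A : PreAlg T) (P : forall x, car (acar A) x -> Prop) : Prop :=
  forall x (a : car (acar A) x),
    definableC (sub (acar A) P) x
      (fun s => le (acar A) x a (fn (aprod A) x (fn (Mmap T (incl _ P)) x s))).

Definition L_definable_alg (A : PreAlg T) : Prop :=
  finitary A /\ forall P, fin_subset (acar A) P -> def_embedded A P.
End Lang.

(* Main.v *)
From Stdlib Require Import List ClassicalEpsilon FunctionalExtensionality
  PropExtensionality ProofIrrelevance Classical Lia.
Require Import Defs.

Lemma mor_ext {Xi} {A B : SPos Xi} (f g : mor A B) :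
  (forall x a, fn f x a = fn g x a) -> f = g.
Proof.
  destruct f as [f hf], g as [g hg]; simpl; intro H.
  assert (f = g) by (apply functional_extensionality_dep; intro x;
    apply functional_extensionality; intro a; apply H).
  subst g. f_equal. apply proof_irrelevance.
Qed.

Lemma Mmap_ext {Xi} (T : Monad Xi) {A B} (f g : mor A B) :
  (forall x a, fn f x a = fn g x a) -> forall x s, fn (Mmap T f) x s = fn (Mmap T g) x s.
Proof. intros H x s. rewrite (mor_ext f g H). reflexivity. Qed.

Lemma sig_eq {U} {P : U -> Prop} (a b : {u | P u}) : proj1_sig a = proj1_sig b -> a = b.
Proof. destruct a, b; simpl; intro; subst; f_equal; apply proof_irrelevance. Qed.

Lemma all_ord n : exists l : list {i : nat | i < n}, forall i, In i l.
Proof.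
  induction n as [|n [l Hl]].
  - exists nil. intros [i hi]. exfalso. inversion hi.
  - exists (map (fun i : {i : nat | i < n} => exist (fun k => k < S n) (proj1_sig i) (le_S _ _ (proj2_sig i))) l
            ++ (exist (fun k => k < S n) n (le_n _) :: nil)).
    intros [i hi]. apply in_or_app.
    destruct (PeanoNat.Nat.eq_dec i n) as [e|e].
    + right. left. apply sig_eq. simpl. subst. reflexivity.
    + left. assert (hi' : i < n) by lia.
      apply in_map_iff. exists (exist _ i hi'). split; [apply sig_eq; reflexivity | apply Hl].
Qed.

Section DefL.
Context {Xi : Type} {T : Monad Xi} (L : Logics T) (HV : varietal L).

Lemma def_ext S x (K K' : car (Mo T (aset S)) x -> Prop) :
  (forall s, K s <-> K' s) -> definable L S x K -> definable L S x K'.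
Proof. intros H [phi Hp]. exists phi. intro s. rewrite <- H. apply Hp. Qed.

Lemma def_sat S x (phi : Form L S x) : definable L S x (fun s => sat L s phi).
Proof. exists phi; tauto. Qed.

Lemma def_lam S G (f : mor (aset S) (aset G)) x K :
  definable L G x K -> definable L S x (fun s => K (fn (Mmap T f) x s)).
Proof. intros [phi Hp]. exists (lam L f phi). intro s. rewrite lam_spec. apply Hp. Qed.

Lemma def_forall_list {I} (l : list I) S x (K : I -> car (Mo T (aset S)) x -> Prop) :
  (forall i, In i l -> definable L S x (K i)) ->
  definable L S x (fun s => forall i, In i l -> K i s).
Proof.
  destruct HV as [H0 [H1 [Hor [Hand _]]]].
  induction l as [|i l IH]; intro Hd.
  - eapply def_ext; [|apply H1]. simpl; tauto.
  - eapply def_ext; [|apply Hand; [apply (Hd i); left; reflexivity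
                                  | apply IH; intros; apply Hd; right; auto]].
    intro s; simpl; split; [intros [h1 h2] j [<-|hj]; auto | intro h; split; auto].
Qed.

Lemma def_exists_list {I} (l : list I) S x (K : I -> car (Mo T (aset S)) x -> Prop) :
  (forall i, In i l -> definable L S x (K i)) ->
  definable L S x (fun s => exists i, In i l /\ K i s).
Proof.
  destruct HV as [H0 [H1 [Hor [Hand _]]]].
  induction l as [|i l IH]; intro Hd.
  - eapply def_ext; [|apply H0]. simpl. intro s; split; [tauto| intros [i [[] _]]].
  - eapply def_ext; [|apply Hor; [apply (Hd i); left; reflexivity
                                  | apply IH; intros; apply Hd; right; auto]].
    intro s; simpl; split.
    + intros [h|[j [hj hk]]]; [exists i; auto | exists j; auto].
    + intros [j [[<-|hj] hk]]; [left; auto | right; exists j; auto].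
Qed.

Definition evalP (A : PreAlg T) (P : forall x, car (acar A) x -> Prop) x
  (s : car (Mo T (disc (sub (acar A) P))) x) : car (acar A) x :=
  fn (aprod A) x (fn (Mmap T (incl _ P)) x (fn (Mmap T (iota (sub (acar A) P))) x s)).

Lemma def_up (A : PreAlg T) P (Hf : spos_finite (sub (acar A) P)) x
  (U : car (acar A) x -> Prop) :
  sortwise_finite (acar A) -> def_embedded L A P ->
  (forall a a', U a -> le (acar A) x a a' -> U a') ->
  definable L (disc_alph _ Hf) x (fun s => U (evalP A P x s)).
Proof.
  intros Hsf Hde Hup. destruct (Hsf x) as [la Hla].
  apply def_ext with (K := fun s => exists a, In a la /\ (U a /\ le (acar A) x a (evalP A P x s))).
  - intro s; split.
    + intros [a [_ [h1 h2]]]. eauto.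
    + intro h. exists (evalP A P x s). split; [apply Hla|]. split; [auto| apply le_refl].
  - apply def_exists_list. intros a _. destruct (classic (U a)) as [hu|hu].
    + destruct (Hde x a) as [Hf' Hd]. assert (Hf' = Hf) by apply proof_irrelevance. subst Hf'.
      eapply def_ext; [|exact Hd]. intro s; unfold evalP; simpl; tauto.
    + eapply def_ext; [|apply (proj1 HV)]. simpl. tauto.
Qed.
End DefL.

Lemma cls_eq {Xi} (A : SPos Xi) R (Ht : forall x a b c, R x a b -> R x b c -> R x a c) x (a b : car A x) :
  R x a b -> R x b a -> cls Xi A R a = cls Xi A R b.
Proof.
  intros r1 r2. unfold cls. apply functional_extensionality; intro c;
  apply propositional_extensionality; split; intros [h1 h2]; split; eauto.
Qed.

Lemma q_eq {Xi} (A : SPos Xi) R Ht Hc x (a b : car A x) :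
  R x a b -> R x b a -> fn (@qmap Xi A R Ht Hc) x a = fn (qmap Ht Hc) x b.
Proof. intros; apply sig_eq; simpl; apply cls_eq; auto. Qed.

Lemma quot_prod {Xi} {T : Monad Xi} (B : PreAlg T) R Ht Hc (H : @cong_with Xi T B R Ht Hc) x s :
  fn (aprod (quotalg H)) x (fn (Mmap T (qmap Ht Hc)) x s) = fn (qmap Ht Hc) x (fn (aprod B) x s).
Proof.
  simpl. destruct (quot_pick Ht Hc x _) as [s0 e0]. simpl.
  apply (q_eq _ _ Ht Hc).
  - apply H; rewrite e0; apply le_refl.
  - apply H; rewrite e0; apply le_refl.
Qed.

Lemma agree_list {U : Type} (l : list (U -> Prop)) :
  exists L0 : list U, forall u, exists v, In v L0 /\ forall p, In p l -> (p u <-> p v).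
Proof.
  induction l as [|p l [L0 HL]].
  - destruct (classic (exists u : U, True)) as [[u0 _]|hn].
    + exists (u0 :: nil). intro u. exists u0. split; [left; auto | intros p []].
    + exists nil. intro u. exfalso. apply hn. exists u. auto.
  - assert (Hb : forall L1 : list U, exists L2 : list U, forall v, In v L1 -> forall u,
        (forall p', In p' l -> (p' u <-> p' v)) ->
        exists w, In w L2 /\ forall p', In p' (p :: l) -> (p' u <-> p' w)).
    { induction L1 as [|v L1 [L2 HL2]].
      - exists nil. intros v [].
      - assert (E1 : exists w1, (exists w, (forall p', In p' l -> (p' w <-> p' v)) /\ p w) ->
                   (forall p', In p' l -> (p' w1 <-> p' v)) /\ p w1).
        { destruct (classic (exists w, (forall p', In p' l -> (p' w <-> p' v)) /\ p w)) as [[w hw]|n];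
          [exists w; auto | exists v; intro h; contradiction]. }
        assert (E2 : exists w2, (exists w, (forall p', In p' l -> (p' w <-> p' v)) /\ ~ p w) ->
                   (forall p', In p' l -> (p' w2 <-> p' v)) /\ ~ p w2).
        { destruct (classic (exists w, (forall p', In p' l -> (p' w <-> p' v)) /\ ~ p w)) as [[w hw]|n];
          [exists w; auto | exists v; intro h; contradiction]. }
        destruct E1 as [w1 H1], E2 as [w2 H2]. exists (w1 :: w2 :: L2).
        intros v' [<-|hv'] u hu.
        + destruct (classic (p u)) as [pu|npu].
          * destruct (H1 (ex_intro _ u (conj hu pu))) as [a1 b1]. exists w1. split; [left; auto|].
            intros p' [<-|hp']; [tauto|]. specialize (hu p' hp'); specialize (a1 p' hp'); tauto.
          * destruct (H2 (ex_intro _ u (conj hu npu))) as [a1 b1]. exists w2. split; [right; left; auto|].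
            intros p' [<-|hp']; [tauto|]. specialize (hu p' hp'); specialize (a1 p' hp'); tauto.
        + destruct (HL2 v' hv' u hu) as [w [hw1 hw2]]. exists w; split; [right; right; auto| auto]. }
    destruct (Hb L0) as [L2 HL2]. exists L2. intro u. destruct (HL u) as [v [hv hag]].
    apply (HL2 v hv u hag).
Qed.

Section Theory.
Context {Xi : Type} {T : Monad Xi} (L : Logics T) (HV : varietal L).
Variables (S : Alphabet Xi) (Delta : Subfam L) (HD : sortwise_finite_sub L Delta).
Variables (Ht : forall x a b c, sqle L Delta S x a b -> sqle L Delta S x b c -> sqle L Delta S x a c)
  (Hc : forall x a b, le (acar (freealg T (aset S))) x a b -> sqle L Delta S x a b)
  (H : cong_with (freealg T (aset S)) (sqle L Delta S) Ht Hc).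

Lemma qp x s : fn (aprod (quotalg H)) x (fn (Mmap T (qmap Ht Hc)) x s)
  = fn (qmap Ht Hc) x (fn (mflat T (aset S)) x s).
Proof. exact (quot_prod (freealg T (aset S)) _ Ht Hc H x s). Qed.

Lemma theta_alg : is_alg (quotalg H).
Proof.
  split.
  - intros x s.
    destruct (pres_surj _ T _ _ _ (pres_surj _ T _ _ _ (qmap_surj Ht Hc)) x s) as [s' <-].
    rewrite <- Mmap_comp.
    rewrite (Mmap_ext T _ (mcomp (qmap Ht Hc) (mflat T _))) by
      (intros y a; cbn [fn mcomp]; apply qp).
    rewrite Mmap_comp, qp.
    rewrite <- mflat_nat. rewrite qp. f_equal. symmetry. apply mflat_assoc.
  - intros x a. destruct (qmap_surj Ht Hc x a) as [a' <-].
    rewrite <- msing_nat. rewrite qp. f_equal. apply mflat_sing.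
Qed.

Lemma theta_swf : sortwise_finite (acar (quotalg H)).
Proof.
  intro x. destruct (HD S x) as [lD [HlD1 HlD2]].
  destruct (agree_list (map (fun psi s => sat L s psi) lD)) as [L0 HL0].
  exists (map (fn (qmap Ht Hc) x) L0).
  intro c. destruct (qmap_surj Ht Hc x c) as [s <-].
  destruct (HL0 s) as [v [hv hag]].
  apply in_map_iff. exists v. split; [|auto].
  assert (key : forall a b, (forall psi, In psi lD -> (sat L a psi <-> sat L b psi)) -> sqle L Delta S x a b).
  { intros a b hab phi hphi ha. destruct (HlD2 phi hphi) as [psi [hin heq]].
    apply heq. apply hab; auto. apply heq; auto. }
  assert (hag' : forall psi, In psi lD -> (sat L s psi <-> sat L v psi)).
  { intros psi hin. apply (hag (fun s => sat L s psi)). apply in_map_iff. exists psi; auto. }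
  apply (q_eq _ _ Ht Hc); apply key; intros psi hin; specialize (hag' psi hin); tauto.
Qed.

Definition gP x (c : car (qpos Ht Hc) x) : Prop :=
  exists sg : car (aset S) x, c = fn (qmap Ht Hc) x (fn (msing T (aset S)) x sg).

Definition gj : mor (aset S) (sub (qpos Ht Hc) gP).
Proof.
  refine {| fn := fun x sg => (exist (gP x) (fn (qmap Ht Hc) x (fn (msing T (aset S)) x sg)) (ex_intro _ sg eq_refl) : car (sub (qpos Ht Hc) gP) x) |}.
  intros x a b h. pose proof (a_discrete _ S x a b h). subst. apply le_refl.
Defined.

Lemma theta_fg : fin_generated (quotalg H).
Proof.
  exists gP. split.
  - destruct (a_finite _ S) as [lS HlS].
    exists (map (fun e => existT (fun x => car (sub (qpos Ht Hc) gP) x) (projT1 e)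
             (exist _ (fn (qmap Ht Hc) _ (fn (msing T (aset S)) _ (projT2 e))) (ex_intro _ (projT2 e) eq_refl))) lS).
    intros x [c [sg e]]. apply in_map_iff. exists (existT _ x sg). split; [|apply HlS].
    simpl. f_equal. apply sig_eq. simpl. auto.
  - intros x c. destruct (qmap_surj Ht Hc x c) as [s <-].
    exists (fn (Mmap T gj) x s).
    rewrite <- Mmap_comp.
    rewrite (Mmap_ext T _ (mcomp (qmap Ht Hc) (msing T (aset S)))) by (intros; reflexivity).
    rewrite Mmap_comp, qp. f_equal. apply mflat_Msing.
Qed.

Definition rep x (c : car (qpos Ht Hc) x) : car (Mo T (aset S)) x :=
  proj1_sig (constructive_indefinite_description _ (proj2_sig c)).

Lemma rep_spec x c : proj1_sig c = cls Xi (Mo T (aset S)) (sqle L Delta S) (rep x c).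
Proof. unfold rep. destruct (constructive_indefinite_description _ _) as [a e]. exact e. Qed.

Lemma q_rep x c : fn (qmap Ht Hc) x (rep x c) = c.
Proof. apply sig_eq. simpl. symmetry. apply rep_spec. Qed.

Lemma le_q x c w : le (qpos Ht Hc) x c (fn (qmap Ht Hc) x w) <-> sqle L Delta S x (rep x c) w.
Proof.
  split.
  - intros [a [b [e1 [e2 r]]]]. simpl in e2.
    apply Ht with a. apply (cls_R _ _ _ Hc). rewrite <- rep_spec. auto.
    apply Ht with b; auto. apply (cls_R _ _ _ Hc). auto.
  - intro r. exists (rep x c), w. split; [apply rep_spec | split; [reflexivity | auto]].
Qed.

Lemma theta_def P : fin_subset (acar (quotalg H)) P -> def_embedded L (quotalg H) P.
Proof.
  intros Hf x c. exists Hf.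
  pose (C := sub (acar (quotalg H)) P).
  pose (r := {| fn := fun y (p : car (disc C) y) => rep y (proj1_sig p);
                fn_mono := fun y a b (e : le (disc C) y a b) =>
                  match e in _ = b' return le (Mo T (aset S)) y (rep y (proj1_sig a)) (rep y (proj1_sig b')) with
                  | eq_refl => le_refl _ _ end |} : mor (disc C) (Mo T (aset S))).
  pose (phir := mcomp (mflat T (aset S)) (Mmap T r)).
  assert (Hm : is_morph (freealg T (aset (disc_alph C Hf))) (freealg T (aset S)) phir).
  { intros y s. cbn [fn mcomp aprod freealg aset disc_alph].
    unfold phir; cbn [fn mcomp].
    rewrite mflat_nat, mflat_assoc, Mmap_comp. reflexivity. }
  destruct (HD S x) as [lD [HlD1 HlD2]].
  apply def_ext with (K := fun s => (fun w => forall psi, In psi lD -> sat L (rep x c) psi -> sat L w psi) (fn phir x s)).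
  - intro s.
    assert (E : fn (aprod (quotalg H)) x (fn (Mmap T (incl _ P)) x (fn (Mmap T (iota (sub (acar (quotalg H)) P))) x s))
                = fn (qmap Ht Hc) x (fn phir x s)).
    { rewrite <- Mmap_comp.
      rewrite (Mmap_ext T _ (mcomp (qmap Ht Hc) r)) by (intros y p; simpl; symmetry; apply q_rep).
      rewrite Mmap_comp, qp. reflexivity. }
    rewrite E, le_q. split.
    + intros h phi hphi hs. destruct (HlD2 phi hphi) as [psi [hin heq]].
      apply heq. apply h; auto. apply heq; auto.
    + intros h psi hin. apply h. apply HlD1; auto.
  - destruct HV as [_ [H1 [_ [_ [Hinv _]]]]].
    refine (Hinv (disc_alph C Hf) S phir Hm x (fun w => forall psi, In psi lD -> sat L (rep x c) psi -> sat L w psi) _).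
    apply def_forall_list; auto. intros psi _.
    destruct (classic (sat L (rep x c) psi)) as [h|h].
    + eapply def_ext; [|apply def_sat with (phi := psi)]. simpl. tauto.
    + eapply def_ext; [|apply H1]. simpl. tauto.
Qed.

Lemma theta_Ldef : L_definable_alg L (quotalg H).
Proof.
  split; [split; [apply theta_alg | split; [apply theta_swf | apply theta_fg]] | apply theta_def].
Qed.
End Theory.

Definition dmor {Xi} {C B : SPos Xi} (f : forall x, car C x -> car B x) : mor (disc C) B.
Proof. refine {| fn := (f : forall x, car (disc C) x -> car B x) |}. intros x a b e. simpl in e. subst. apply le_refl. Defined.

Section Closure.
Context {Xi : Type} {T : Monad Xi} (L : Logics T) (HV : varietal L).

Lemma quot_Ldef (A B : PreAlg T) (h : mor (acar A) (acar B)) :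
  L_definable_alg L A -> is_alg B -> is_morph A B h -> sort_surj h -> L_definable_alg L B.
Proof.
  intros [[HAa [HAsf [PA [HPA HgA]]]] HAd] HB Hm Hs.
  split; [split; [exact HB | split] |].
  - intro x. destruct (HAsf x) as [la Hla]. exists (map (fn h x) la).
    intro b. destruct (Hs x b) as [a <-]. apply in_map. apply Hla.
  - pose (PB := fun y (b : car (acar B) y) => exists a, PA y a /\ fn h y a = b).
    pose (h' := {| fn := fun y (p : car (sub (acar A) PA) y) =>
                    (exist (PB y) (fn h y (proj1_sig p)) (ex_intro _ (proj1_sig p) (conj (proj2_sig p) eq_refl)) : car (sub (acar B) PB) y);
                   fn_mono := fun y a b e => fn_mono h e |} : mor (sub (acar A) PA) (sub (acar B) PB)).
    exists PB. split.
    + destruct HPA as [lP HlP].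
      exists (map (fun e => existT (fun y => car (sub (acar B) PB) y) (projT1 e) (fn h' _ (projT2 e))) lP).
      intros y [b [a [pa eb]]]. apply in_map_iff. exists (existT _ y (exist _ a pa)). split; [|apply HlP].
      simpl; f_equal; try (apply sig_eq; simpl; auto).
    + intros y b. destruct (Hs y b) as [a <-]. destruct (HgA y a) as [s <-].
      exists (fn (Mmap T h') y s).
      rewrite Hm. rewrite <- !Mmap_comp. f_equal; try (apply Mmap_ext; intros; reflexivity).
  - intros P Hf x b. pose proof Hf as [lP HlP].
    pose (r := fun y (p : car (sub (acar B) P) y) => proj1_sig (constructive_indefinite_description _ (Hs y (proj1_sig p)))).
    assert (hr : forall y p, fn h y (r y p) = proj1_sig p).
    { intros; unfold r; destruct (constructive_indefinite_description _ _); auto. }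
    pose (P' := fun y (a : car (acar A) y) => exists p, a = r y p).
    pose (k := dmor (B := disc (sub (acar A) P')) (fun y (p : car (sub (acar B) P) y) =>
                 (exist (P' y) (r y p) (ex_intro _ p eq_refl) : car (sub (acar A) P') y))).
    assert (Hf' : fin_subset (acar A) P').
    { exists (map (fun e => existT (fun y => car (sub (acar A) P') y) (projT1 e) (fn k _ (projT2 e))) lP).
      intros y [a [p ea]]. apply in_map_iff. exists (existT _ y p). split; [|apply HlP].
      simpl; f_equal; try (apply sig_eq; simpl; auto). }
    exists Hf.
    eapply def_ext; [| apply (def_lam L (disc_alph _ Hf) (disc_alph _ Hf') k x
                          (fun t => le (acar B) x b (fn h x (evalP A P' x t))))].
    + intro s. assert (E : fn h x (evalP A P' x (fn (Mmap T k) x s)) =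
         fn (aprod B) x (fn (Mmap T (incl _ P)) x (fn (Mmap T (iota (sub (acar B) P))) x s))).
      { unfold evalP. rewrite Hm. rewrite <- !Mmap_comp. f_equal; apply Mmap_ext.
        intros y p. simpl. apply hr. }
      simpl. rewrite E. tauto.
    + apply (def_up L HV A P' Hf' x (fun a => le (acar B) x b (fn h x a))); auto.
      intros a a' h1 h2. eapply le_trans; [exact h1| apply fn_mono; exact h2].
Qed.

Lemma prod_Ldef n (F : {i : nat | i < n} -> PreAlg T) Q (Hcl : alg_closed (prodalg F) Q) :
  (forall i, L_definable_alg L (F i)) -> finitary (subalg _ _ Hcl) -> L_definable_alg L (subalg _ _ Hcl).
Proof.
  intros HF Hfin. split; [exact Hfin|]. intros P Hf x b. exists Hf.
  pose proof Hf as [lP HlP].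
  destruct (all_ord n) as [li Hli].
  pose (Pi := fun i y (a : car (acar (F i)) y) => exists p : car (sub (acar (subalg _ _ Hcl)) P) y,
                a = proj1_sig (proj1_sig p) i).
  pose (ki := fun i => dmor (B := disc (sub (acar (F i)) (Pi i)))
               (fun y (p : car (sub (acar (subalg _ _ Hcl)) P) y) =>
                  (exist (Pi i y) (proj1_sig (proj1_sig p) i) (ex_intro _ p eq_refl) : car (sub (acar (F i)) (Pi i)) y))).
  assert (Hfi : forall i, fin_subset (acar (F i)) (Pi i)).
  { intro i. exists (map (fun e => existT (fun y => car (sub (acar (F i)) (Pi i)) y) (projT1 e) (fn (ki i) _ (projT2 e))) lP).
    intros y [a [p ea]]. apply in_map_iff. exists (existT _ y p). split; [|apply HlP].
    simpl; f_equal; try (apply sig_eq; simpl; auto). }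
  apply def_ext with (K := fun s => forall i, In i li ->
     (fun t => le (acar (F i)) x (proj1_sig b i) (evalP (F i) (Pi i) x t)) (fn (Mmap T (ki i)) x s)).
  - intro s. simpl.
    assert (E : forall i, evalP (F i) (Pi i) x (fn (Mmap T (ki i)) x s) =
       fn (aprod (F i)) x (fn (Mmap T (piProj (fun i => acar (F i)) i)) x
         (fn (Mmap T (incl _ Q)) x (fn (Mmap T (incl _ P)) x
           (fn (Mmap T (iota (sub (acar (subalg _ _ Hcl)) P))) x s))))).
    { intro i. unfold evalP. f_equal. rewrite <- !Mmap_comp. apply Mmap_ext. intros; reflexivity. }
    split.
    + intros hh i. rewrite <- E. apply hh. apply Hli.
    + intros hh i _. rewrite E. apply hh.
  - apply def_forall_list; auto. intros i _.
    apply (def_lam L (disc_alph _ Hf) (disc_alph _ (Hfi i)) (ki i) x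
             (fun t => le (acar (F i)) x (proj1_sig b i) (evalP (F i) (Pi i) x t))).
    apply (def_up L HV (F i) (Pi i) (Hfi i) x (fun a => le (acar (F i)) x (proj1_sig b i) a)).
    + destruct (HF i) as [[_ [hs _]] _]; exact hs.
    + destruct (HF i) as [_ hd]; apply hd, Hfi.
    + intros a a' h1 h2; eapply le_trans; eauto.
Qed.

Lemma acc_Ldef (B : PreAlg T) : finitary B ->
  (forall D, finite_sorts D -> exists A, L_definable_alg L A /\ res_quotient D A B) -> L_definable_alg L B.
Proof.
  intros HB Hacc. split; [exact HB|]. intros P Hf x b. exists Hf.
  pose proof Hf as [lP HlP].
  pose (D := fun y => y = x \/ exists p, P y p).
  assert (HDf : finite_sorts D).
  { exists (x :: map (@projT1 _ _) lP). intros y [<-|[p hp]]; [left; auto| right].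
    apply in_map_iff. exists (existT _ y (exist _ p hp)); split; auto. }
  destruct (Hacc D HDf) as [A [HA [h [hs hm]]]].
  pose (pre := fun y (p : car (sub (acar B) P) y) =>
     (exist (fun _ => D y) (proj1_sig p) (or_intror (ex_intro _ (proj1_sig p) (proj2_sig p))) : car (res (acar B) D) y)).
  pose (j := fun y p => proj1_sig (constructive_indefinite_description _ (hs y (pre y p)))).
  assert (hj : forall y p, fn h y (j y p) = pre y p).
  { intros; unfold j; destruct (constructive_indefinite_description _ _); auto. }
  pose (r := fun y p => proj1_sig (j y p)).
  pose (P' := fun y (a : car (acar A) y) => exists p, a = r y p).
  pose (k := dmor (B := disc (sub (acar A) P')) (fun y (p : car (sub (acar B) P) y) =>
                 (exist (P' y) (r y p) (ex_intro _ p eq_refl) : car (sub (acar A) P') y))).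
  assert (Hf' : fin_subset (acar A) P').
  { exists (map (fun e => existT (fun y => car (sub (acar A) P') y) (projT1 e) (fn k _ (projT2 e))) lP).
    intros y [a [p ea]]. apply in_map_iff. exists (existT _ y p). split; [|apply HlP].
    simpl; f_equal; try (apply sig_eq; simpl; auto). }
  pose (jm := dmor (B := res (acar A) D) j).
  assert (dx : D x) by (left; reflexivity).
  eapply def_ext; [| apply (def_lam L (disc_alph _ Hf) (disc_alph _ Hf') k x
      (fun t => le (acar B) x b (proj1_sig (fn h x (exist (fun _ => D x) (evalP A P' x t) dx)))))].
  - intro s.
    assert (E1 : evalP A P' x (fn (Mmap T k) x s) =
                 fn (aprod A) x (fn (Mmap T (incl _ _)) x (fn (Mmap T jm) x s))).
    { unfold evalP. f_equal. rewrite <- !Mmap_comp. apply Mmap_ext. intros; reflexivity. }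
    simpl. rewrite E1, (hm x dx). simpl. rewrite <- !Mmap_comp.
    assert (E2 : fn (Mmap T (mcomp (mcomp (incl (acar B) (fun x _ => D x)) h) jm)) x s =
                 fn (Mmap T (mcomp (incl (acar B) P) (iota (sub (acar B) P)))) x s).
    { apply Mmap_ext. intros y p. simpl. rewrite hj. reflexivity. }
    erewrite (Mmap_ext T _ (mcomp (incl (acar B) P) (iota (sub (acar B) P))));
      [tauto| intros y p; simpl; rewrite hj; reflexivity].
  - apply (def_up L HV A P' Hf' x (fun a => le (acar B) x b (proj1_sig (fn h x (exist (fun _ => D x) a dx))))).
    + destruct HA as [[_ [hsf _]] _]; exact hsf.
    + destruct HA as [_ hd]; apply hd, Hf'.
    + intros a a' h1 h2. eapply le_trans; [exact h1|].
      exact (fn_mono h (x := x) (a := exist _ a dx) (b := exist _ a' dx) h2).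
Qed.

Lemma Ldef_pv : pseudovariety (L_definable_alg L).
Proof.
  split; [intros A [h _]; exact h|].
  split; [intros A B h HA HB Hm Hs; eapply quot_Ldef; eauto|].
  split; [intros n F P H HF Hfin; apply prod_Ldef; auto| intros B HB Hacc; apply acc_Ldef; auto].
Qed.
End Closure.

Section Main.
Context {Xi : Type} {T : Monad Xi} (L : Logics T) (HC : compositional L).

Definition evm (A : PreAlg T) P : mor (Mo T (disc (sub (acar A) P))) (acar A) :=
  mcomp (aprod A) (Mmap T (mcomp (incl _ P) (iota _))).

Lemma evm_eq A P y s : fn (evm A P) y s = evalP A P y s.
Proof. unfold evm, evalP. simpl. rewrite Mmap_comp. reflexivity. Qed.

Lemma evalP_flat (A : PreAlg T) P (HA : is_alg A) y z :
  evalP A P y (fn (mflat T _) y z) = fn (aprod A) y (fn (Mmap T (evm A P)) y z).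
Proof.
  rewrite <- evm_eq. unfold evm. simpl. rewrite mflat_nat. rewrite <- (proj1 HA).
  rewrite <- Mmap_comp. reflexivity.
Qed.

Lemma iota_surj (C : SPos Xi) : sort_surj (iota C).
Proof. intros x b. exists b. reflexivity. Qed.

Lemma def_to_gen (A : PreAlg T) : L_definable_alg L A -> generated_pv (theory_alg L) A.
Proof.
  intros [HAf HAd] V [_ [_ [_ Hacc]]] HK.
  apply Hacc; [exact HAf|]. intros D [l Hl].
  destruct HAf as [HAa [HAsf [P [HPf Hgen]]]].
  pose (Sg := disc_alph (sub (acar A) P) HPf).
  assert (Hex : forall y (a : car (acar A) y), exists phi : Form L Sg y,
             forall s : car (Mo T (aset Sg)) y, le (acar A) y a (evalP A P y s) <-> sat L s phi).
  { intros y a. destruct (HAd P HPf y a) as [Hf' Hd].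
    assert (Hf' = HPf) by apply proof_irrelevance. subst Hf'. exact Hd. }
  pose (fphi := fun y a => proj1_sig (constructive_indefinite_description _ (Hex y a))).
  assert (Hfphi : forall y a (s : car (Mo T (aset Sg)) y), le (acar A) y a (evalP A P y s) <-> sat L s (fphi y a)).
  { intros; unfold fphi; destruct (constructive_indefinite_description _ _); auto. }
  pose (la := fun y => proj1_sig (constructive_indefinite_description _ (HAsf y))).
  assert (Hla : forall y a, In a (la y)).
  { intros; unfold la; destruct (constructive_indefinite_description _ _); auto. }
  pose (Phi := (fun S0 y phi => exists E : Sg = S0, In y l /\
                  exists a, phi = eq_rect Sg (fun S1 => Form L S1 y) (fphi y a) S0 E) : Subfam L).
  assert (HPhi : finite_sub L Phi).
  { intro S0. destruct (classic (Sg = S0)) as [E|NE].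
    - subst S0. exists (flat_map (fun y => map (fun a => existT (fun y => Form L Sg y) y (fphi y a)) (la y)) l).
      split.
      + intros e He. apply in_flat_map in He as [y [hy He]]. apply in_map_iff in He as [a [<- _]].
        simpl. exists eq_refl. split; auto. exists a. reflexivity.
      + intros y phi [E [hy [a ->]]]. rewrite (proof_irrelevance _ E eq_refl). simpl.
        exists (fphi y a). split; [|intro; tauto].
        apply in_flat_map. exists y. split; auto. apply in_map_iff. exists a. split; [reflexivity | apply Hla].
    - exists nil. split; [intros e []|]. intros y phi [E _]. contradiction. }
  destruct (HC Phi HPhi) as [Delta [HDs [Hsub Hcong]]].
  destruct (Hcong Sg) as [Ht [Hc H]].
  assert (HVT : V (quotalg H)).
  { apply HK. exists Sg, Delta. split; auto. exists Ht, Hc, H. reflexivity. }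
  exists (quotalg H). split; auto.
  assert (key : forall y, D y -> forall s t, sqle L Delta Sg y s t ->
                  le (acar A) y (evalP A P y s) (evalP A P y t)).
  { intros y dy s t hst. apply Hfphi. apply hst.
    - apply Hsub. exists eq_refl. split; [apply Hl; auto| exists (evalP A P y s); reflexivity].
    - apply Hfphi. apply le_refl. }
  pose (g := fun y (c : car (qpos Ht Hc) y) => evalP A P y (rep L Sg Delta Ht Hc y c)).
  assert (gq : forall y, D y -> forall s, g y (fn (qmap Ht Hc) y s) = evalP A P y s).
  { intros y dy s. unfold g. pose proof (rep_spec L Sg Delta Ht Hc y (fn (qmap Ht Hc) y s)) as E.
    apply le_antisym; apply key; auto; apply (cls_R _ _ _ Hc); [symmetry|]; exact E. }
  assert (gmono : forall y, D y -> forall c c', le (qpos Ht Hc) y c c' -> le (acar A) y (g y c) (g y c')).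
  { intros y dy c c' hc. destruct (qmap_surj Ht Hc y c') as [s' <-].
    apply (le_q L Sg Delta Ht Hc) in hc. rewrite (gq y dy s'). apply key; auto. }
  pose (h := {| fn := fun y (c : car (res (qpos Ht Hc) D) y) =>
                  (exist (fun _ => D y) (g y (proj1_sig c)) (proj2_sig c) : car (res (acar A) D) y);
                fn_mono := fun y c c' hc => gmono y (proj2_sig c) _ _ hc |}
             : mor (res (qpos Ht Hc) D) (res (acar A) D)).
  exists h. split.
  - intros y [a dy].
    destruct (Hgen y a) as [s1 hs1].
    destruct (pres_surj _ T _ _ _ (iota_surj (sub (acar A) P)) y s1) as [s0 <-].
    exists (exist _ (fn (qmap Ht Hc) y s0) dy). apply sig_eq.
    change (g y (fn (qmap Ht Hc) y s0) = a). rewrite gq; auto.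
  - intros y dy u.
    pose (qD := {| fn := fun y (w : car (res (Mo T (aset Sg)) D) y) =>
                    (exist (fun _ => D y) (fn (qmap Ht Hc) y (proj1_sig w)) (proj2_sig w) : car (res (qpos Ht Hc) D) y);
                   fn_mono := fun y w w' hw => fn_mono (qmap Ht Hc) hw |}
               : mor (res (Mo T (aset Sg)) D) (res (qpos Ht Hc) D)).
    assert (qDs : sort_surj qD).
    { intros z [c dz]. destruct (qmap_surj Ht Hc z c) as [w <-]. exists (exist _ w dz). reflexivity. }
    destruct (pres_surj _ T _ _ _ qDs y u) as [u' <-].
    apply sig_eq.
    transitivity (evalP A P y (fn (mflat T _) y (fn (Mmap T (incl _ (fun z (_ : car (Mo T (aset Sg)) z) => D z))) y u'))).
    + change (g y (fn (aprod (quotalg H)) y (fn (Mmap T (incl _ _)) y (fn (Mmap T qD) y u'))) =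
              evalP A P y (fn (mflat T _) y (fn (Mmap T (incl _ (fun z (_ : car (Mo T (aset Sg)) z) => D z))) y u'))).
      rewrite <- Mmap_comp.
      rewrite (Mmap_ext T _ (mcomp (qmap Ht Hc) (incl _ (fun z (_ : car (Mo T (aset Sg)) z) => D z))))
        by (intros; reflexivity).
      rewrite Mmap_comp.
      rewrite (quot_prod (freealg T (aset Sg)) _ Ht Hc H). apply gq; auto.
    + rewrite evalP_flat; auto. simpl. rewrite <- !Mmap_comp. f_equal. apply Mmap_ext.
      intros z [w dz]. change (fn (evm A P) z w = g z (fn (qmap Ht Hc) z w)).
      rewrite evm_eq. symmetry. apply gq; auto.
Qed.
End Main.

Theorem theorem9p11 (Xi : Type) (T : Monad Xi) (L : Logics T)
  (HV : varietal L) (HC : compositional L)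
  (A : PreAlg T) (HA : is_alg A) :
  L_definable_alg L A <-> generated_pv (theory_alg L) A.
Proof.
  split.
  - apply def_to_gen; auto.
  - intro G. apply G.
    + apply Ldef_pv; auto.
    + intros B [S [Delta [HD [Ht [Hc [H ->]]]]]]. apply (theta_Ldef L HV S Delta HD Ht Hc H).
Qed.
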